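(* Let $\mathbb{K}$ be a non-Archimedean valued field with residue field $\mathfrak{r}$ such that $\chi(\mathbb{K}) = \chi(\mathfrak{r})$. Then for every topological group $G$ and every $n \geq 1$, the comparison map $c^n : H^n_{cb}(G, \mathbb{K}) \to H^n_c(G, \mathbb{K})$ is injective.
   Context: A non-Archimedean valued field is a field with an absolute value satisfying the ultrametric inequality; $\mathfrak{o}=\{|x|_\mathbb{K}\le1\}$, $\mathfrak{m}=\{|x|_\mathbb{K}<1\}$, $\mathfrak{r}=\mathfrak{o}/\mathfrak{m}$, $\chi$ = characteristic. $\mathbb{K}$ is a trivial $G$-module. Bar resolution: $\overline{C}^0=\mathbb{K}$, for $n\ge1$ $\overline{C}^n(G,\mathbb{K})$ = continuous maps $G^n\to\mathbb{K}$ and $\overline{C}^n_b(G,\mathbb{K})$ = bounded continuous ones, coboundary $\delta^nf(g_1,\dots,g_{n+1})=f(g_2,\dots,g_{n+1})+\sum_{i=1}^n(-1)^if(g_1,\dots,g_ig_{i+1},\dots,g_{n+1})+(-1)^{n+1}f(g_1,\dots,g_n)$. $H^\bullet_c$ and $H^\bullet_{cb}$ are the cohomologies of these complexes, and the comparison map is induced by inclusion. *)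

(* Defs.v *)
From mathcomp Require Import all_boot all_order all_algebra.
From mathcomp Require Import all_classical all_reals all_analysis.
Set Implicit Arguments. Unset Strict Implicit. Unset Printing Implicit Defensive.
Import Order.TTheory GRing.Theory Num.Theory.
Local Open Scope ring_scope.

Definition nonarch_abs (R : realType) (K : fieldType) (abs : K -> R) : Prop :=
  [/\ (forall x, 0 <= abs x),
      (forall x, abs x = 0 <-> x = 0),
      (forall x y, abs (x * y) = abs x * abs y) &
      (forall x y, abs (x + y) <= Num.max (abs x) (abs y))].

(* Characteristic of the residue field r = o / m, o = {|x| <= 1},
   m = {|x| < 1}: a prime p is the characteristic of r iff p%:R = 0 in r,
   i.e. iff the image of p in o (p * 1_K, which lies in o) lies in m. *)
Definition residue_pchar (R : realType) (K : fieldType) (abs : K -> R) :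
  pred nat := fun p => prime p && (abs (p%:R : K) < 1).

Definition is_topological_group (G : topologicalType)
  (mul : G -> G -> G) (one : G) (inv : G -> G) : Prop :=
  [/\ (forall x y z, mul x (mul y z) = mul (mul x y) z),
      (forall x, mul one x = x /\ mul x one = x),
      (forall x, mul (inv x) x = one /\ mul x (inv x) = one),
      continuous (fun p : G * G => mul p.1 p.2) &
      continuous inv].

Section Cochains.
Variables (R : realType) (K : fieldType) (abs : K -> R).
Variables (G : topologicalType) (mul : G -> G -> G).

Definition abs_continuous (X : topologicalType) (f : X -> K) : Prop :=
  forall x (e : R), 0 < e -> \forall y \near x, abs (f y - f x) < e.

Definition abs_bounded (X : Type) (f : X -> K) : Prop :=
  exists M : R, forall x, abs (f x) <= M.

(* n-cochains: maps G^n -> K; for n = 0 these are the constants, i.e. K *)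
Definition cochain (n : nat) := {ptws 'I_n -> G} -> K.

Definition cont_cochain n (f : cochain n) := abs_continuous f.
Definition bcont_cochain n (f : cochain n) := abs_continuous f /\ abs_bounded f.

(* (g_1,...,g_{n+1}) |-> (g_1,...,g_k g_{k+1},...,g_{n+1}) (0-indexed k) *)
Definition merge_face n (k : 'I_n) (g : 'I_n.+1 -> G) : 'I_n -> G :=
  fun i => if (i < k)%N then g (widen_ord (leqnSn n) i)
           else if i == k then mul (g (widen_ord (leqnSn n) i)) (g (lift ord0 i))
           else g (lift ord0 i).

Definition coboundary n (f : cochain n) : cochain n.+1 :=
  fun g => f (fun i => g (lift ord0 i))
         + \sum_(k < n) (-1) ^+ k.+1 * f (merge_face k g)
         + (-1) ^+ n.+1 * f (fun i => g (widen_ord (leqnSn n) i)).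

(* Injectivity of c^n : H^n_cb(G,K) -> H^n_c(G,K) for n >= 1, unfolded:
   a bounded continuous n-cocycle which is the coboundary of a continuous
   (n-1)-cochain is the coboundary of a bounded continuous (n-1)-cochain.
   Here the degree n >= 1 is written m.+1. *)
Definition comparison_injective (m : nat) : Prop :=
  forall f : cochain m.+1,
    bcont_cochain f -> coboundary f = (fun _ => 0) ->
    (exists g : cochain m, cont_cochain g /\ f = coboundary g) ->
    exists h : cochain m, bcont_cochain h /\ f = coboundary h.

End Cochains.

(* Main.v *)
Require Import Defs.
From mathcomp Require Import all_boot all_order all_algebra.
From mathcomp Require Import all_classical all_reals all_analysis.
From mathcomp Require Import ring lra.
Import Order.TTheory GRing.Theory Num.Theory.
Local Open Scope ring_scope.

Definition Qs (K : fieldType) (c : K) :=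
  exists (k : int) (m : nat), (m%:R != 0 :> K) /\ c = k%:~R / m%:R.
Arguments Qs {K}.

Section QsS.
Variable K : fieldType.

Lemma Qs_int (k : int) : Qs (k%:~R : K).
Proof. by exists k, 1%N; rewrite oner_eq0 divr1. Qed.

Lemma Qs0 : Qs (0 : K). Proof. by have := Qs_int 0. Qed.
Lemma Qs1 : Qs (1 : K). Proof. by have := Qs_int 1. Qed.
Lemma QsN1 : Qs (-1 : K). Proof. by have := Qs_int (-1); rewrite mulrN1z. Qed.

Lemma QsD (a b : K) : Qs a -> Qs b -> Qs (a + b).
Proof.
case=> k1 [m1 [h1 ->]] [k2 [m2 [h2 ->]]].
exists (k1 * m2%:Z + k2 * m1%:Z), (m1 * m2)%N; split.
  by rewrite natrM mulf_neq0.
rewrite natrM intrD !intrM -!pmulrn; field.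
by rewrite h1 h2.
Qed.

Lemma QsM (a b : K) : Qs a -> Qs b -> Qs (a * b).
Proof.
case=> k1 [m1 [h1 ->]] [k2 [m2 [h2 ->]]].
exists (k1 * k2), (m1 * m2)%N; split.
  by rewrite natrM mulf_neq0.
rewrite natrM intrM; field.
by rewrite h1 h2.
Qed.

Lemma QsV (a : K) : Qs a -> a != 0 -> Qs a^-1.
Proof.
case=> k [m [h ->]] ha.
have hk : (k%:~R : K) != 0 by move: ha; rewrite mulf_eq0 negb_or => /andP[].
case: k hk {ha} => n hk.
  exists m, n; split; first by rewrite -pmulrn in hk.
  rewrite -pmulrn -pmulrn in hk *; field.
  by rewrite h hk.
exists (- m%:Z), n.+1; split.
  by move: hk; rewrite NegzE mulrNz oppr_eq0 -pmulrn.
move: hk; rewrite NegzE !mulrNz oppr_eq0 -!pmulrn => hk.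
field. by rewrite oppr_eq0 nat1r hk h.
Qed.

Lemma QsX (c : K) k : Qs c -> Qs (c ^+ k).
Proof.
move=> hc; elim: k => [|k IH]; first by rewrite expr0; exact: Qs1.
by rewrite exprS; apply: QsM.
Qed.

End QsS.

Section Aux.
Variables (R : realType) (K : fieldType) (abs : K -> R).
Hypothesis habs : nonarch_abs abs.
Hypothesis hchar : forall p : nat, (p \in [pchar K]%R) = residue_pchar abs p.

Lemma abs_ge0 x : 0 <= abs x. Proof. by case: habs. Qed.
Lemma abs_eq0 x : abs x = 0 <-> x = 0. Proof. by case: habs. Qed.
Lemma absM x y : abs (x * y) = abs x * abs y. Proof. by case: habs. Qed.
Lemma absD x y : abs (x + y) <= Num.max (abs x) (abs y). Proof. by case: habs. Qed.

Lemma abs1 : abs 1 = 1.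
Proof.
have h : abs 1 != 0 by apply/eqP => /abs_eq0/eqP; rewrite oner_eq0.
apply: (mulIf h); rewrite mul1r -absM mulr1 //.
Qed.

Lemma absN1 : abs (-1) = 1.
Proof.
apply/eqP; rewrite -(sqrp_eq1 (abs_ge0 _)) expr2 -absM mulrNN mulr1 abs1 //.
Qed.

Lemma absN x : abs (- x) = abs x.
Proof. by rewrite -mulN1r absM absN1 mul1r. Qed.

Lemma absB_le a b M : abs a <= M -> abs b <= M -> abs (a + b) <= M.
Proof.
move=> ha hb; apply: le_trans (absD a b) _; rewrite ge_max ha hb //.
Qed.

Lemma abs_nat n : abs (n%:R : K) <= 1.
Proof.
elim: n => [|n IH]; first by rewrite (proj2 (abs_eq0 0)) // ler01.
by rewrite mulrSr; apply: absB_le => //; rewrite abs1.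
Qed.

Lemma abs_int (k : int) : abs (k%:~R : K) <= 1.
Proof.
case: k => n; first by rewrite -pmulrn abs_nat.
by rewrite NegzE mulrNz absN -pmulrn abs_nat.
Qed.

Lemma abs_nat_ge (m : nat) : (m%:R : K) != 0 -> 1 <= abs (m%:R : K).
Proof.
elim/ltn_ind: m => m IH hm.
case: m IH hm => [|[|m]] IH hm; first by rewrite eqxx in hm.
  by rewrite abs1.
have hp := pdiv_prime (isT : (1 < m.+2)%N).
have hd := pdiv_dvd m.+2.
set p := pdiv m.+2 in hp hd.
have e : m.+2 = (m.+2 %/ p * p)%N by rewrite divnK.
move: hm; rewrite e natrM mulf_eq0 negb_or => /andP[h1 h2].
rewrite absM; rewrite -[1]mulr1; apply: ler_pM => //.
- apply: IH h1; rewrite ltn_divLR ?prime_gt0 //.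
  by rewrite ltn_Pmulr // prime_gt1.
- rewrite leNgt; apply/negP => hlt.
  have : residue_pchar abs p by rewrite /residue_pchar hp hlt.
  by rewrite -hchar => /andP[_ /eqP]; apply/eqP.
Qed.

Lemma Qs_abs c : Qs c -> abs c <= 1.
Proof.
case=> k [m [hm ->]].
rewrite absM.
have hm' := @abs_nat_ge m hm.
have h0 : 0 < abs (m%:R : K) by apply: lt_le_trans hm'.
have hinv : abs ((m%:R : K)^-1) = (abs (m%:R : K))^-1.
  apply: (mulfI (lt0r_neq0 h0)); rewrite -absM divff // abs1 divff //.
  exact: lt0r_neq0.
rewrite hinv; apply: mulr_ile1; rewrite ?abs_ge0 ?invr_ge0 ?abs_ge0 ?abs_int //.
by rewrite invf_le1.
Qed.

End Aux.

Local Open Scope classical_set_scope.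
Section Retract.
Variables (K : fieldType) (B : set K).
Hypothesis B0 : B 0.
Hypothesis BD : forall a b, B a -> B b -> B (a + b).
Hypothesis BQ : forall c a, Qs c -> B a -> B (c * a).

Definition good (Γ : set (K * K)) :=
 [/\ forall a b b', Γ (a,b) -> Γ (a,b') -> b = b',
     forall a, B a -> Γ (a,a),
     forall a b, Γ (a,b) -> B b,
     forall a b a' b', Γ (a,b) -> Γ (a',b') -> Γ (a+a', b+b') &
     forall c a b, Qs c -> Γ (a,b) -> Γ (c*a, c*b)].

Definition Dg : set (K * K) := [set p | B p.1 /\ p.2 = p.1].

Lemma goodD : good Dg.
Proof.
split.
- by move=> a b b' [_ /= ->] [_ /= ->].
- by move=> a Ba; split.
- by move=> a b [Ba /= ->].
- by move=> a b a' b' [Ba /= ->] [Ba' /= ->]; split => //; exact: BD.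
- by move=> c a b Qc [Ba /= ->]; split => //; exact: BQ.
Qed.

Lemma chain_good (F : set (set (K * K))) :
  F `<=` (fun X => good (X `|` Dg)) -> total_on F subset ->
  good ((\bigcup_(X in F) X) `|` Dg).
Proof.
move=> FP tot.
set U := (\bigcup_(X in F) X) `|` Dg.
have pair : forall u v, U u -> U v ->
    exists Z, [/\ good (Z `|` Dg), (Z `|` Dg) u, (Z `|` Dg) v & (Z `|` Dg) `<=` U].
  have sub : forall Z, F Z -> (Z `|` Dg) `<=` U.
    move=> Z FZ p [Zp|Dp]; [left; exists Z => // | by right].
  move=> u v [[X FX Xu]|Du] [[Y FY Yv]|Dv].
  - case: (tot X Y FX FY) => XY.
      by exists Y; split; [exact: FP | left; exact: XY | left | exact: sub].
    by exists X; split; [exact: FP | left | left; exact: XY | exact: sub].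
  - by exists X; split; [exact: FP | left | right | exact: sub].
  - by exists Y; split; [exact: FP | right | left | exact: sub].
  - exists set0; split; [by rewrite set0U; exact: goodD | by right | by right |].
    by rewrite set0U => p Dp; right.
split.
- move=> a b b' h1 h2; have [Z [[g1 _ _ _ _] z1 z2 _]] := pair _ _ h1 h2.
  exact: g1 z1 z2.
- by move=> a Ba; right.
- move=> a b h1; have [Z [[_ _ g3 _ _] z1 _ _]] := pair _ _ h1 h1.
  exact: g3 z1.
- move=> a b a' b' h1 h2; have [Z [[_ _ _ g4 _] z1 z2 zs]] := pair _ _ h1 h2.
  exact/zs/g4.
- move=> c a b Qc h1; have [Z [[_ _ _ _ g5] z1 _ zs]] := pair _ _ h1 h1.
  exact/zs/g5.
Qed.

Lemma extend (Γ : set (K * K)) x : good Γ -> ~ (exists b, Γ (x, b)) ->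
  good [set p | exists s t c, [/\ Γ (s, t), Qs c, p.1 = s + c * x & p.2 = t]].
Proof.
move=> [g1 g2 g3 g4 g5] nx.
have gN : forall a b, Γ (a, b) -> Γ (-a, -b).
  by move=> a b h; have := g5 (-1) a b (QsN1 K) h; rewrite !mulN1r.
split.
- move=> a b b' [s [t [c [h1 Qc /= e1 e2]]]] [s' [t' [c' [h1' Qc' /= e1' e2']]]].
  rewrite e2 e2'.
  have hcc : c = c'.
    apply/eqP; apply/negP => /negP hne.
    have hne' : c - c' != 0 by rewrite subr_eq0.
    have hQ : Qs (c - c')^-1.
      apply: QsV hne'; apply: QsD Qc _; rewrite -mulN1r; apply: QsM => //.
      exact: QsN1.
    apply: nx; exists ((c - c')^-1 * (t' - t)).
    have ex : x = (c - c')^-1 * (s' - s).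
      apply: (mulfI hne'); rewrite mulrA divff // mul1r.
      have : s + c * x = s' + c' * x by rewrite -e1 -e1'.
      move=> e; apply/eqP; rewrite -subr_eq0; apply/eqP.
      have -> : (c - c') * x - (s' - s) = (s + c * x) - (s' + c' * x) by ring.
      by rewrite e subrr.
    rewrite ex; apply: g5 hQ _; apply: g4 h1' _; exact: gN.
  have ess : s = s'.
    apply: (addIr (c * x)); rewrite -e1 e1' hcc //.
  rewrite ess in h1; exact: g1 h1 h1'.
- move=> a Ba; exists a, a, 0; split => //; first exact: g2.
    exact: Qs0.
  by rewrite /= mul0r addr0.
- by move=> a b [s [t [c [h1 _ _ /= ->]]]]; exact: g3 h1.
- move=> a b a' b' [s [t [c [h1 Qc /= -> ->]]]] [s' [t' [c' [h1' Qc' /= -> ->]]]].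
  exists (s + s'), (t + t'), (c + c'); split => //; first exact: g4.
    exact: QsD.
  rewrite /= mulrDl; ring.
- move=> d a b Qd [s [t [c [h1 Qc /= -> ->]]]].
  exists (d * s), (d * t), (d * c); split => //; first exact: g5.
    exact: QsM.
  rewrite /=; ring.
Qed.

Lemma retract_exists : exists r : K -> K,
  [/\ forall a b, r (a + b) = r a + r b,
      forall c a, Qs c -> r (c * a) = c * r a,
      forall a, B (r a) &
      forall a, B a -> r a = a].
Proof.
have [A [PA maxA]] := Zorn_bigcup chain_good.
have dom : forall y, exists b, (A `|` Dg) (y, b).
  move=> y; apply/not_existsP => ny.
  have ny' : ~ (exists b, (A `|` Dg) (y, b)) by case=> b /ny.
  have := @extend (A `|` Dg) y PA ny'.
  set Gm := (X in good X -> _).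
  move=> gGm.
  have AGm : (A `|` Dg) `<=` Gm.
    case=> a b h; exists a, b, 0; split => //; first exact: Qs0.
    by rewrite /= mul0r addr0.
  apply: (maxA Gm).
    split; first by move=> p Ap; apply: AGm; left.
    move=> hsub; apply: ny'; exists 0.
    have : Gm (y, 0).
      exists 0, 0, 1; split; [by right|exact: Qs1|by rewrite /= mul1r add0r|by []].
    by move=> /hsub; left.
  have -> : Gm `|` Dg = Gm.
    apply/seteqP; split; [move=> p [//|Dp]; apply: AGm; by right | by move=> p Gp; left].
  exact: gGm.
pose r y := sval (cid (dom y)).
have rP : forall y, (A `|` Dg) (y, r y) by move=> y; exact: svalP (cid (dom y)).
case: PA => g1 g2 g3 g4 g5.
exists r; split.
- move=> a b; apply: g1 (rP _) _; exact: g4.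
- move=> c a Qc; apply: g1 (rP _) _; exact: g5.
- move=> a; exact: g3 (rP a).
- move=> a Ba; apply: g1 (rP _) _; exact: g2.
Qed.

End Retract.

Local Close Scope classical_set_scope.

Theorem theorem9p41 (R : realType) (K : fieldType) (abs : K -> R)
  (habs : nonarch_abs abs)
  (hchar : forall p : nat, (p \in [pchar K]%R) = residue_pchar abs p)
  (G : topologicalType) (mul : G -> G -> G) (one : G) (inv : G -> G)
  (hG : is_topological_group mul one inv) (n : nat) (hn : (1 <= n)%N) :
  comparison_injective abs mul n.-1.
Proof.
move=> f [fc [M0 fM0]] _ [g [gc ef]].
subst f.
set M := Num.max M0 1.
have hM1 : 1 <= M by rewrite le_max lexx orbT.
have hM0 : M0 <= M by rewrite le_max lexx.
have B0 : abs 0 <= M by rewrite (proj2 (@abs_eq0 _ _ _ habs 0)) // (le_trans ler01).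
have BD : forall a b, abs a <= M -> abs b <= M -> abs (a + b) <= M.
  by move=> a b; apply: (@absB_le _ _ _ habs).
have BQ : forall c a, Qs c -> abs a <= M -> abs (c * a) <= M.
  move=> c a Qc ha; rewrite (@absM _ _ _ habs); apply: le_trans ha.
  apply: ler_piMl; first exact: (@abs_ge0 _ _ _ habs).
  exact: (@Qs_abs _ _ _ habs hchar c Qc).
have [r [rD rQ rB rid]] := @retract_exists K (fun y => abs y <= M) B0 BD BQ.
have r0 : r 0 = 0.
  by apply: (addIr (r 0)); rewrite add0r -rD addr0.
have rB' : forall a b, r (a - b) = r a - r b.
  move=> a b; apply: (addIr (r b)); rewrite -rD subrK //.
  by rewrite subrK.
exists (r \o g); split; [split|].
- move=> x e he.
  have hm : 0 < Num.min e 1 by rewrite lt_min he ltr01.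
  apply: filterS (gc x _ hm) => y hy /=.
  rewrite -rB' rid.
    by apply: (lt_le_trans hy); rewrite ge_min lexx.
  apply/ltW/(lt_le_trans hy); rewrite ge_min.
  by rewrite hM1 orbT.
- by exists M => x; exact: rB.
- apply: funext => z.
  rewrite -(rid (coboundary mul g z)); last exact: le_trans (fM0 z) hM0.
  rewrite /coboundary rD rD /=.
  rewrite (big_morph r rD r0).
  rewrite rQ; last by apply: QsX; exact: QsN1.
  congr (_ + _ + _).
  apply: eq_bigr => k _; rewrite rQ //.
  by apply: QsX; exact: QsN1.
Qed.
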